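(* Let $V$ be an $n$-dimensional vector space over $\mathbb{F}_q$ with $n\ge 4$, let $Y$ be a set of transvections in $\mathrm{SL}(V)$ and $H=\langle Y\rangle$. Then $H$ acts irreducibly on $V$ if and only if the following three conditions hold: (1) ${}_VY$ spans $V$; (2) $Y_{V^*}$ spans $V^*$; (3) the transvection graph $\Gamma(Y)$ is strongly connected.
   Context: Every transvection can be written as $1+u\otimes\phi$, i.e. $x\mapsto x+\phi(x)u$, with $0\ne u\in V$, $0\ne\phi\in V^*$, $\phi(u)=0$. ${}_VY=\{v\in V:\exists\phi\in V^*,\ 1+v\otimes\phi\in Y\}$ and $Y_{V^*}=\{\phi\in V^*:\exists v\in V,\ 1+v\otimes\phi\in Y\}$. The transvection graph $\Gamma(Y)$ is the directed graph with vertex set $Y$ and a directed edge from $s=1+u\otimes\phi$ to $t=1+v\otimes\psi$ iff $\psi(u)\ne 0$ (independent of the chosen representations). Strongly connected means there is a directed path between any two distinct vertices in each direction. *)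

(* Defs.v *)
From HB Require Import structures.
From mathcomp Require Import all_boot all_order all_algebra all_fingroup.
From mathcomp Require Import mxrepresentation mxabelem.
Set Implicit Arguments. Unset Strict Implicit. Unset Printing Implicit Defensive.
Import GRing.Theory.
Local Open Scope ring_scope.

(* Conventions: V = 'rV[F]_m (row vectors), m = n.-1.+1 = n (n >= 1).
   A matrix g acts on V by x |-> x *m g (as in MathComp representations).
   A linear form phi in V^* is represented by a column vector f : 'cV_m,
   phi(x) = x *m f.  The transvection 1 + u (x) phi, x |-> x + phi(x) u,
   is then the matrix 1%:M + f *m u. *)

Section Transvections.
Variables (F : finFieldType) (m : nat).

Definition tv_rep (t : 'M[F]_m) (u : 'rV[F]_m) (f : 'cV[F]_m) : bool :=
  [&& u != 0, f != 0, u *m f == 0 & t == 1%:M + f *m u].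

Definition is_transvection (t : 'M[F]_m) : Prop :=
  exists u f, tv_rep t u f.

Definition VY (Y : {set 'M[F]_m}) : {set 'rV[F]_m} :=
  [set u | [exists t in Y, exists f, tv_rep t u f]].

Definition YVs (Y : {set 'M[F]_m}) : {set 'cV[F]_m} :=
  [set f | [exists t in Y, exists u, tv_rep t u f]].

Definition spansV (S : {set 'rV[F]_m}) : bool :=
  row_full (\sum_(u in S) <<u>>)%MS.

Definition spansVs (S : {set 'cV[F]_m}) : bool :=
  row_full (\sum_(f in S) <<f^T>>)%MS.

Definition tv_edge (s t : 'M[F]_m) : bool :=
  [exists u, exists f, exists v, exists g,
     [&& tv_rep s u f, tv_rep t v g & u *m g != 0]].

Definition tgraph (Y : {set 'M[F]_m}) : rel 'M[F]_m :=
  [rel s t | [&& s \in Y, t \in Y & tv_edge s t]].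

Definition strongly_connected (Y : {set 'M[F]_m}) : Prop :=
  forall s t, s \in Y -> t \in Y -> s != t -> connect (tgraph Y) s t.

End Transvections.

Definition natrep (F : finFieldType) (n : nat) (H : {group {'GL_n[F]}}) :
  mx_representation F H n.-1.+1 :=
  subg_repr (GLrepr F n.-1) (subsetT H).

Definition mxset (F : finFieldType) (n : nat) (Y : {set {'GL_n[F]}}) :
  {set 'M[F]_n.-1.+1} := [set GLval y | y in Y].

(* Main.v *)
Require Import Defs.
From HB Require Import structures.
From mathcomp Require Import all_boot all_order all_algebra all_fingroup.
From mathcomp Require Import mxrepresentation mxabelem.
Set Implicit Arguments. Unset Strict Implicit. Unset Printing Implicit Defensive.
Import GRing.Theory.
Open Scope ring_scope.

Lemma mod_char (F : finFieldType) (n : nat) (Y : {set {'GL_n[F]}}) k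
   (W : 'M[F]_(k, n.-1.+1)) :
  mxmodule (natrep <<Y>>%G) W <-> (forall t, t \in mxset Y -> (W *m t <= W)%MS).
Proof.
split.
  move/mxmoduleP => H t /imsetP [y yY ->].
  exact: (H y (mem_gen yY)).
move=> H; rewrite /mxmodule gen_subG; apply/subsetP => y yY.
rewrite inE mem_gen //=; apply: H; exact: imset_f.
Qed.

Section Aux.
Variables (F : finFieldType) (m : nat).

Lemma col_inv k (c : 'M[F]_(k,1)) : c != 0 -> exists r : 'M_(1,k), r *m c = 1%:M.
Proof.
move=> nz; apply/row_fullP; rewrite /row_full eqn_leq rank_leq_col lt0n mxrank_eq0 nz.
by [].
Qed.

Lemma full_mul0 k p (W : 'M[F]_(k, m)) (c : 'M[F]_(m, p)) :
  row_full W -> W *m c = 0 -> c = 0.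
Proof.
by case/row_fullP => B HB H; rewrite -[c]mul1mx -HB -mulmxA H mulmx0.
Qed.

Lemma tv_min1 t u f : tv_rep t u f -> t - 1%:M = f *m u :> 'M[F]_m.
Proof. by case/and4P => _ _ _ /eqP ->; rewrite addrC addKr. Qed.

Lemma rep_sub k (W : 'M[F]_(k, m)) t u f :
  tv_rep t u f -> ((t - 1%:M <= W) <-> (u <= W))%MS.
Proof.
move=> r; rewrite (tv_min1 r); split => H; last exact: submx_trans (submxMl f u) H.
case/and4P: r => _ nf _ _; have [r rf] := col_inv nf.
by rewrite -[u]mul1mx -rf -mulmxA; apply: submx_trans (submxMl _ _) H.
Qed.

Lemma tv_sub k (W : 'M[F]_(k, m)) t u f :
  tv_rep t u f -> (u <= W)%MS -> (W *m t <= W)%MS.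
Proof.
move=> r uW; have -> : t = 1%:M + f *m u by case/and4P: r => _ _ _ /eqP.
rewrite mulmxDr mulmx1 mulmxA; apply: addmx_sub; first exact: submx_refl.
exact: submx_trans (submxMl _ _) uW.
Qed.

Lemma tm1 k (W : 'M[F]_(k, m)) t : (W *m t <= W)%MS -> (W *m (t - 1%:M) <= W)%MS.
Proof.
move=> H; rewrite mulmxBr mulmx1; apply: addmx_sub => //.
by rewrite eqmx_opp submx_refl.
Qed.

Lemma sum_ker (I : finType) (P : pred I) k (A_ : I -> 'M[F]_(k, m)) p (c : 'M[F]_(m, p)) :
  (forall i, P i -> A_ i *m c = 0) -> (\sum_(i | P i) <<A_ i>>)%MS *m c = 0.
Proof.
move=> H; apply/sub_kermxP; apply/sumsmx_subP => i Pi; rewrite genmxE.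
by apply/sub_kermxP; apply: H.
Qed.

Lemma connect_ind (T : finType) (e : rel T) (Q : T -> Prop) x y :
  (forall a b, e a b -> Q a -> Q b) -> connect e x y -> Q x -> Q y.
Proof.
move=> He /connectP [p]; elim: p x => [|z p IH] x /=; first by move=> _ ->.
by case/andP => exz pz Ey Qx; apply: (IH z pz Ey); apply: He Qx.
Qed.

End Aux.

Lemma main_lemma (F : finFieldType) (n : nat) (Y : {set {'GL_n[F]}}) :
  (3 < n)%N ->
  (forall y, y \in Y -> is_transvection (GLval y)) ->
  mx_irreducible (natrep <<Y>>%G)
  <-> [/\ spansV (VY (mxset Y)), spansVs (YVs (mxset Y))
        & strongly_connected (mxset Y)].
Proof.
move=> n3 Htv.
set T := mxset Y.
have Hrep : forall t, t \in T -> exists u f, tv_rep t u f.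
  by move=> t /imsetP [y yY ->]; exact: Htv.
have inVY : forall t u f, t \in T -> tv_rep t u f -> u \in VY T.
  move=> t u f tT r; rewrite inE; apply/existsP; exists t; rewrite tT /=.
  by apply/existsP; exists f.
have inYVs : forall t u f, t \in T -> tv_rep t u f -> f \in YVs T.
  move=> t u f tT r; rewrite inE; apply/existsP; exists t; rewrite tT /=.
  by apply/existsP; exists u.
have mkedge : forall a b u f v g, a \in T -> b \in T -> tv_rep a u f ->
    tv_rep b v g -> u *m g != 0 -> tgraph T a b.
  move=> a b u f v g aT bT ra rb nz; rewrite /tgraph /= aT bT /=.
  apply/existsP; exists u; apply/existsP; exists f; apply/existsP; exists v.
  by apply/existsP; exists g; rewrite ra rb nz.
split.
- case/mx_irrP => _ irrU.
  have [T0 | [t0 t0T]] := set_0Vmem T.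
    exfalso.
    have modU : mxmodule (natrep <<Y>>%G) <<delta_mx 0 0 : 'rV[F]_(n.-1.+1)>>%MS.
      by apply/mod_char => t; rewrite -/T T0 inE.
    have := irrU _ modU; rewrite -mxrank_eq0 mxrank_gen mxrank_delta => /(_ isT).
    rewrite /row_full mxrank_gen mxrank_delta => /eqP h.
    by move: n3; case: (n) h => [|[|k]] //.
  have [u0 [f0 r0]] := Hrep t0 t0T.
  split.
  + apply: irrU.
      apply/mod_char => t tT; have [u [f r]] := Hrep t tT; apply: (tv_sub r).
      by apply: (sumsmx_sup u) (inVY _ _ _ tT r) _; rewrite genmxE.
    apply/eqP => W0; have /and4P [nu _ _ _] := r0; apply/negP: nu; apply/negPn.
    rewrite -submx0 -W0; apply: (sumsmx_sup u0) (inVY _ _ _ t0T r0) _.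
    by rewrite genmxE.
  + set S := (\sum_(f in YVs T) <<f^T>>)%MS.
    have fS : forall t u f, t \in T -> tv_rep t u f -> (f^T <= S)%MS.
      move=> t u f tT r.
      by apply: (sumsmx_sup f) (inYVs _ _ _ tT r) _; rewrite genmxE.
    have modK : mxmodule (natrep <<Y>>%G) (kermx S^T).
      apply/mod_char => t tT; have [u [f r]] := Hrep t tT.
      have Kf : kermx S^T *m f = 0.
        case/submxP: (fS _ _ _ tT r) => a Ha.
        by rewrite -[f]trmxK Ha trmx_mul mulmxA mulmx_ker mul0mx.
      have -> : t = 1%:M + f *m u by case/and4P: r => _ _ _ /eqP.
      by rewrite mulmxDr mulmx1 mulmxA Kf mul0mx addr0 submx_refl.
    have : kermx S^T == 0.
      apply/negPn/negP => nz; have full := irrU _ modK nz.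
      have ST0 := full_mul0 full (mulmx_ker S^T).
      have := fS _ _ _ t0T r0; rewrite -[S]trmxK ST0 trmx0 submx0 => /eqP h.
      have /and4P [_ nf _ _] := r0; apply/negP: nf; apply/negPn.
      by rewrite -[f0]trmxK h trmx0.
    by rewrite kermx_eq0 /row_free mxrank_tr.
  + move=> s t sT tT st.
    set R := [set x in T | connect (tgraph T) s x].
    set W := (\sum_(x in R) <<x - 1%:M>>)%MS.
    have modW : mxmodule (natrep <<Y>>%G) W.
      apply/mod_char => t' t'T; have [u' [f' r']] := Hrep t' t'T.
      case: (boolP (W *m f' == 0)) => [/eqP Wf | nz].
        have -> : t' = 1%:M + f' *m u' by case/and4P: r' => _ _ _ /eqP.
        by rewrite mulmxDr mulmx1 mulmxA Wf mul0mx addr0 submx_refl.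
      apply: (tv_sub r').
      have t'R : t' \in R.
        case: (boolP [forall x in R, (x - 1%:M) *m f' == 0]) =>
            [/forall_inP H | /forall_inPn [x xR nx]].
          move: nz; rewrite /W sum_ker ?eqxx // => x xR; exact/eqP/H.
        move: xR; rewrite inE => /andP [xT cx]; rewrite inE t'T /=.
        apply: connect_trans cx _; apply: connect1.
        have [ux [fx rx]] := Hrep x xT.
        apply: (mkedge _ _ _ _ _ _ xT t'T rx r').
        apply: contra nx; rewrite (tv_min1 rx) -mulmxA => /eqP ->.
        by rewrite mulmx0.
      apply/(rep_sub _ r'); apply: (sumsmx_sup t') t'R _; by rewrite genmxE.
    have sR : s \in R by rewrite inE sT connect0.
    have nzW : W != 0.
      apply/eqP => W0; have [us [fs rs]] := Hrep s sT.
      have : (s - 1%:M <= W)%MS by apply: (sumsmx_sup s) sR _; rewrite genmxE.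
      rewrite W0 => /(rep_sub _ rs); rewrite submx0.
      by case/and4P: rs => /negbTE ->.
    have fullW := irrU _ modW nzW.
    apply: contraT => nc; have [ut [ft rt]] := Hrep t tT.
    have : W *m ft = 0.
      rewrite /W sum_ker // => x; rewrite inE => /andP [xT cx].
      have [ux [fx rx]] := Hrep x xT.
      rewrite (tv_min1 rx) -mulmxA.
      case: (boolP (ux *m ft == 0)) => [/eqP -> | nz]; first by rewrite mulmx0.
      exfalso; apply/negP: nc; apply/negPn.
      apply: connect_trans cx (connect1 _); exact: (mkedge _ _ _ _ _ _ xT tT rx rt).
    move/(full_mul0 fullW) => ft0.
    by case/and4P: rt => _; rewrite ft0 eqxx.
- case => sV sVs sc; apply/mx_irrP; split => // U modU nzU.
  have modT := iffLR (mod_char Y U) modU.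
  have [t0 [u0 [f0 [t0T r0 nz0]]]] :
      exists t u f, [/\ t \in T, tv_rep t u f & U *m f != 0].
    case: (boolP [forall f in YVs T, U *m f == 0]) =>
        [/forall_inP H | /forall_inPn [f fY nz]].
      exfalso; apply/negP: nzU; apply/negPn.
      have : (\sum_(f in YVs T) <<f^T>>)%MS *m U^T = 0.
        by apply: (sum_ker (A_ := fun f => f^T)) => f fY; rewrite -trmx_mul (eqP (H f fY)) trmx0.
      move/(full_mul0 sVs) => h.
      by rewrite -[U]trmxK h trmx0.
    move: fY; rewrite inE => /exists_inP [t tT /existsP [u r]].
    by exists t, u, f.
  have u0U : (u0 <= U)%MS.
    have := tm1 (modT t0 t0T); rewrite (tv_min1 r0) mulmxA => h.
    have [r rf] := col_inv nz0.
    by rewrite -[u0]mul1mx -rf -mulmxA; apply: submx_trans (submxMl _ _) h.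
  have P0 : (t0 - 1%:M <= U)%MS by apply/(rep_sub _ r0).
  have Pall : forall t, t \in T -> (t - 1%:M <= U)%MS.
    move=> t tT; case: (eqVneq t0 t) => [<- // | ne].
    apply: (connect_ind (Q := fun x => (x - 1%:M <= U)%MS) _ (sc _ _ t0T tT ne) P0).
    move=> a b /= /and3P [aT bT /existsP [u /existsP [f /existsP [v
      /existsP [g /and3P [ra rb nz]]]]]] Pa.
    have uU : (u <= U)%MS by apply/(rep_sub _ ra).
    have := submx_trans (submxMr (b - 1%:M) uU) (tm1 (modT b bT)).
    rewrite (tv_min1 rb) mulmxA => h; have [r rf] := col_inv nz.
    apply: submx_trans (submxMl g v) _.
    by rewrite -[v]mul1mx -rf -mulmxA; apply: submx_trans (submxMl _ _) h.
  have SU : (\sum_(u in VY T) <<u>> <= U)%MS.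
    apply/sumsmx_subP => u; rewrite inE => /exists_inP [t tT /existsP [f r]].
    by rewrite genmxE; apply/(rep_sub _ r)/Pall.
  rewrite /row_full eqn_leq rank_leq_col /=.
  apply: leq_trans _ (mxrankS SU); by rewrite (eqP sV).
Qed.

Close Scope ring_scope.

Theorem theorem3p1 (F : finFieldType) (n : nat) (Y : {set {'GL_n[F]}}) :
  3 < n ->
  (forall y, y \in Y -> is_transvection (GLval y)) ->
  mx_irreducible (natrep <<Y>>%G)
  <-> [/\ spansV (VY (mxset Y)), spansVs (YVs (mxset Y))
        & strongly_connected (mxset Y)].
Proof. exact: main_lemma. Qed.
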